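(* Let $f(u)=|u|^{p-1}u$ with $p>1$, and fix $\beta<2$. Then $$d(\beta,c)=O\Big((c_*-c)^{\frac{p+3}{2(p-1)}}\Big)\qquad\text{as } c\to c_*^-.$$
   Context: Setting: $F(s)=\int_0^sf=|s|^{p+1}/(p+1)$, and $c_*=\sqrt{1-\beta_+^2/4}$ with $\beta_+=\max\{\beta,0\}$. Definitions, for $c^2<1$ and $\beta<2\sqrt{1-c^2}$: - $I(u)=\int u_{xx}^2-\beta u_x^2+(1-c^2)u^2\,dx$ and $K(u)=(p+1)\int F(u)\,dx$. - $m(\beta,c)=\inf\{I(u)/K(u)^{2/(p+1)}:u\in H^2(\mathbb R),u\ne0\}$. - $d(\beta,c)=\frac{p-1}{2(p+1)}m(\beta,c)^{(p+1)/(p-1)}$. Equivalently $d=E(\vec\varphi)+cQ(\vec\varphi)$ at any ground state $\vec\varphi=(\varphi,-c\varphi)$, where $E(u,v)=\int\frac12(u_{xx}^2-\beta u_x^2+u^2+v^2)-F(u)$ and $Q(u,v)=\int uv$. *)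

(* Defs.v *)
From Stdlib Require Import Reals Lra ClassicalEpsilon.
Open Scope R_scope.

(* |s|^q, with the convention 0^q = 0 (q > 0 in all uses). *)
Definition abspow (s q : R) : R :=
  if Req_EM_T s 0 then 0 else Rpower (Rabs s) q.

(* F(s) = |s|^(p+1)/(p+1), the primitive of f(u) = |u|^(p-1) u. *)
Definition Fprim (p s : R) : R := abspow s (p + 1) / (p + 1).

Definition IntR (g : R -> R) (v : R) : Prop :=
  exists L : R, 0 < L /\ (forall x, L < Rabs x -> g x = 0) /\
    exists pr : Riemann_integrable g (- L) L, RiemannInt pr = v.

Definition admissible (u u1 u2 : R -> R) : Prop :=
  (forall x, derivable_pt_lim u x (u1 x)) /\
  (forall x, derivable_pt_lim u1 x (u2 x)) /\
  continuity u2 /\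
  (exists L : R, forall x, L < Rabs x -> u x = 0) /\
  (exists x, u x <> 0).

Definition quotients (p beta c : R) (r : R) : Prop :=
  exists u u1 u2 Iv Fv,
    admissible u u1 u2 /\
    IntR (fun x => u2 x ^ 2 - beta * u1 x ^ 2 + (1 - c ^ 2) * u x ^ 2) Iv /\
    IntR (fun x => Fprim p (u x)) Fv /\
    r = Iv / Rpower ((p + 1) * Fv) (2 / (p + 1)).

Definition is_glb (E : R -> Prop) (m : R) : Prop :=
  (forall x, E x -> m <= x) /\ (forall b, (forall x, E x -> b <= x) -> b <= m).

(* Infimum of a set of reals (arbitrary value if no glb exists). *)
Definition Rinf (E : R -> Prop) : R :=
  epsilon (inhabits 0) (fun m => is_glb E m).

Definition m_inf (p beta c : R) : R := Rinf (quotients p beta c).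

Definition d_val (p beta c : R) : R :=
  (p - 1) / (2 * (p + 1)) * Rpower (m_inf p beta c) ((p + 1) / (p - 1)).

Definition c_star (beta : R) : R := sqrt (1 - Rmax beta 0 ^ 2 / 4).

(* Main.v *)
Require Import Defs.
From Stdlib Require Import Reals Lra Psatz ClassicalEpsilon.
From Coquelicot Require Import Coquelicot.
Open Scope R_scope.

Lemma loc_R (x r : R) (P : R -> Prop) : 0 < r ->
  (forall y, Rabs (y - x) < r -> P y) -> locally x P.
Proof. intros Hr H. exists (mkposreal r Hr). intros y Hy. apply H. exact Hy. Qed.

Ltac rr := match goal with |- @eq _ ?a ?b => change (@eq R a b) end.

Definition Pp (t : R) := (t + Rabs t) / 2.
Definition h0 (t : R) := Pp t ^ 3.
Definition h1 (t : R) := 3 * Pp t ^ 2.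
Definition h2 (t : R) := 6 * Pp t.

Lemma Pp_pos t : 0 < t -> Pp t = t.
Proof. intros; unfold Pp; rewrite Rabs_right; lra. Qed.
Lemma Pp_neg t : t <= 0 -> Pp t = 0.
Proof. intros; unfold Pp; rewrite Rabs_left1; lra. Qed.
Lemma Pp_bnd t : 0 <= Pp t <= Rabs t.
Proof. unfold Pp; destruct (Rle_dec 0 t); [rewrite Rabs_right|rewrite Rabs_left]; lra. Qed.

Lemma deriv0 (f : R -> R) (C : R) : 0 < C -> f 0 = 0 ->
  (forall k, Rabs k <= 1 -> Rabs (f k) <= C * (k * k)) -> is_derive f 0 0.
Proof.
  intros HC H0 Hb. apply is_derive_Reals. intros eps Heps.
  assert (Hd : 0 < Rmin 1 (eps / C)) by (apply Rmin_pos; [lra| apply Rdiv_lt_0_compat; lra]).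
  exists (mkposreal _ Hd). intros k Hk Hlt. simpl in Hlt.
  replace (0 + k) with k by ring. rewrite H0.
  assert (Hk1 : Rabs k <= 1) by (pose proof (Rmin_l 1 (eps/C)); lra).
  assert (Hk2 : Rabs k < eps / C) by (pose proof (Rmin_r 1 (eps/C)); lra).
  assert (Hak : 0 < Rabs k) by (apply Rabs_pos_lt; auto).
  replace ((f k - 0) / k - 0) with (f k / k) by (field; auto).
  rewrite Rabs_div by auto.
  apply (Rmult_lt_reg_r (Rabs k)); auto.
  unfold Rdiv; rewrite Rmult_assoc, Rinv_l, Rmult_1_r by lra.
  eapply Rle_lt_trans. apply Hb; auto.
  replace (k * k) with (Rabs k * Rabs k) by (rewrite <- Rabs_mult; apply Rabs_right; nra).
  assert (C * Rabs k < eps).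
  { apply (Rmult_lt_reg_r (/ C)). apply Rinv_0_lt_compat; lra.
    replace (C * Rabs k * / C) with (Rabs k) by (field; lra). exact Hk2. }
  nra.
Qed.

Lemma h0_der t : is_derive h0 t (h1 t).
Proof.
  destruct (Rtotal_order t 0) as [Hn|[He|Hp]].
  - apply (is_derive_ext_loc (fun _ : R => 0)).
    + apply (loc_R t (-t)); [lra|]. intros y Hy; cbv beta. unfold h0. rewrite Pp_neg. rr; ring.
      apply Rabs_def2 in Hy. lra.
    + unfold h1. rewrite Pp_neg by lra. replace (3 * 0 ^ 2) with 0 by ring. auto_derive; try easy; rr; ring.
  - subst. unfold h1. rewrite Pp_neg by lra. replace (3 * 0^2) with 0 by ring.
    apply (deriv0 _ 1); [lra| |].
    { unfold h0; rewrite Pp_neg by lra. ring. }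
    intros k Hk. unfold h0. pose proof (Pp_bnd k). rewrite Rabs_right by (apply Rle_ge, pow_le; lra).
    assert (Rabs k * Rabs k = k * k) by (rewrite <- Rabs_mult; apply Rabs_right; nra).
    pose proof (Rabs_pos k). nra.
  - apply (is_derive_ext_loc (fun y : R => y ^ 3)).
    + apply (loc_R t t); [lra|]. intros y Hy; cbv beta. unfold h0. apply Rabs_def2 in Hy. rewrite Pp_pos; [rr; ring|lra].
    + unfold h1. rewrite Pp_pos by lra. auto_derive; try easy; rr; ring.
Qed.

Lemma h1_der t : is_derive h1 t (h2 t).
Proof.
  destruct (Rtotal_order t 0) as [Hn|[He|Hp]].
  - apply (is_derive_ext_loc (fun _ : R => 0)).
    + apply (loc_R t (-t)); [lra|]. intros y Hy; cbv beta. unfold h1. rewrite Pp_neg. rr; ring.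
      apply Rabs_def2 in Hy. lra.
    + unfold h2. rewrite Pp_neg by lra. replace (6 * 0) with 0 by ring. auto_derive; try easy; rr; ring.
  - subst. unfold h2. rewrite Pp_neg by lra. replace (6 * 0) with 0 by ring.
    apply (deriv0 _ 3); [lra| unfold h1; rewrite Pp_neg by lra; ring|].
    intros k Hk. unfold h1. pose proof (Pp_bnd k). rewrite Rabs_right by nra.
    assert (Rabs k * Rabs k = k * k) by (rewrite <- Rabs_mult; apply Rabs_right; nra).
    pose proof (Rabs_pos k). nra.
  - apply (is_derive_ext_loc (fun y : R => 3 * y ^ 2)).
    + apply (loc_R t t); [lra|]. intros y Hy; cbv beta. unfold h1. apply Rabs_def2 in Hy. rewrite Pp_pos; [rr; ring|lra].
    + unfold h2. rewrite Pp_pos by lra. auto_derive; try easy; rr; ring.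
Qed.

Lemma Pp_cont t : continuity_pt Pp t.
Proof.
  unfold Pp. apply continuity_pt_div; [| apply continuity_pt_const; intros ??; auto | lra].
  apply continuity_pt_plus. apply derivable_continuous_pt, derivable_pt_id.
  apply Rcontinuity_abs.
Qed.

Lemma h2_cont t : continuity_pt h2 t.
Proof. unfold h2. apply continuity_pt_scal. apply Pp_cont. Qed.
Definition phi (y : R) := h0 (1 - y ^ 2).
Definition phi1 (y : R) := -2 * y * h1 (1 - y ^ 2).
Definition phi2 (y : R) := -2 * h1 (1 - y ^ 2) + 4 * y ^ 2 * h2 (1 - y ^ 2).

Lemma phi_der y : is_derive phi y (phi1 y).
Proof.
  unfold phi, phi1. auto_derive.
  - exists (h1 (1 - y^2)). apply h0_der.
  - rewrite (is_derive_unique _ _ _ (h0_der _)). rr. replace (1 + - (y * (y * 1))) with (1 - y^2) by ring. ring.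
Qed.
Lemma phi1_der y : is_derive phi1 y (phi2 y).
Proof.
  unfold phi1, phi2. auto_derive.
  - exists (h2 (1 - y^2)). apply h1_der.
  - rewrite (is_derive_unique _ _ _ (h1_der _)). rr. replace (1 + - (y * (y * 1))) with (1 - y^2) by ring. ring.
Qed.

Definition TU (e xi w x : R) := phi (e * x) * cos (xi * x + w).
Definition TU1 (e xi w x : R) :=
  e * phi1 (e * x) * cos (xi * x + w) - xi * phi (e * x) * sin (xi * x + w).
Definition TU2 (e xi w x : R) :=
  e ^ 2 * phi2 (e * x) * cos (xi * x + w) - 2 * e * xi * phi1 (e * x) * sin (xi * x + w)
  - xi ^ 2 * phi (e * x) * cos (xi * x + w).

Lemma TU_der e xi w x : is_derive (TU e xi w) x (TU1 e xi w x).
Proof.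
  unfold TU, TU1. auto_derive.
  - exists (phi1 (e * x)). apply phi_der.
  - rewrite (is_derive_unique _ _ _ (phi_der _)). rr; ring.
Qed.
Lemma TU1_der e xi w x : is_derive (TU1 e xi w) x (TU2 e xi w x).
Proof.
  unfold TU1, TU2. auto_derive.
  - split; [exists (phi2 (e * x)); apply phi1_der|].
    split; [exists (phi1 (e * x)); apply phi_der|]. auto.
  - rewrite (is_derive_unique _ _ _ (phi_der _)), (is_derive_unique _ _ _ (phi1_der _)). rr; ring.
Qed.
Definition cont (f : R -> R) := forall x, continuity_pt f x.

Lemma cont_continuous f x : cont f -> continuous f x.
Proof. intros H. apply continuity_pt_filterlim. apply H. Qed.

Lemma cont_ex f a b : cont f -> ex_RInt f a b.
Proof. intros H. apply (ex_RInt_continuous (V := R_CompleteNormedModule)). intros; apply cont_continuous; auto. Qed.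

Lemma RInt_add f g a b : ex_RInt f a b -> ex_RInt g a b ->
  RInt (fun x => f x + g x) a b = RInt f a b + RInt g a b.
Proof. intros H1 H2. exact (RInt_plus f g a b H1 H2). Qed.

Lemma RInt_mulc f a b k : ex_RInt f a b ->
  RInt (fun x => k * f x) a b = k * RInt f a b.
Proof. intros H1. exact (RInt_scal f a b k H1). Qed.

Lemma RInt_sub f g a b : ex_RInt f a b -> ex_RInt g a b ->
  RInt (fun x => f x - g x) a b = RInt f a b - RInt g a b.
Proof. intros H1 H2. exact (RInt_minus f g a b H1 H2). Qed.

Lemma RInt_cst a b k : RInt (fun _ => k) a b = (b - a) * k.
Proof. rewrite RInt_const. reflexivity. Qed.

Lemma RInt_zero_on f a b : a <= b -> (forall x, a < x < b -> f x = 0) -> RInt f a b = 0.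
Proof.
  intros Hab H. rewrite (RInt_ext f (fun _ => 0)).
  - rewrite RInt_cst. rr; ring.
  - intros x Hx. rewrite Rmin_left, Rmax_right in Hx by lra. apply H; auto.
Qed.

Lemma RInt_supp_eq f L1 L2 : cont f -> 0 <= L1 <= L2 ->
  (forall x, L1 < Rabs x -> f x = 0) -> RInt f (-L1) L1 = RInt f (-L2) L2.
Proof.
  intros Hc HL Hs.
  rewrite <- (RInt_Chasles f (-L2) (-L1) L2) by (apply cont_ex; auto).
  rewrite <- (RInt_Chasles f (-L1) L1 L2) by (apply cont_ex; auto).
  rewrite (RInt_zero_on f (-L2) (-L1)), (RInt_zero_on f L1 L2).
  - assert (HH : forall r : R, r = 0 + (r + 0)) by (intros; ring). apply HH.
  - lra.
  - intros x Hx. apply Hs. rewrite Rabs_right; lra.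
  - lra.
  - intros x Hx. apply Hs. rewrite Rabs_left; lra.
Qed.

Lemma IntR_val g v M : IntR g v -> cont g -> 0 < M ->
  (forall x, M < Rabs x -> g x = 0) -> v = RInt g (-M) M.
Proof.
  intros [L [HL [Hs [pr Hpr]]]] Hc HM HsM.
  rewrite <- Hpr, <- RInt_Reals.
  destruct (Rle_dec L M).
  - apply RInt_supp_eq; auto; lra.
  - symmetry. apply RInt_supp_eq; auto; lra.
Qed.

Lemma RInt_le' f g a b : a <= b -> cont f -> cont g -> (forall x, a <= x <= b -> f x <= g x) ->
  RInt f a b <= RInt g a b.
Proof. intros. apply RInt_le; auto; try (apply cont_ex; auto). intros; apply H2; lra. Qed.

Lemma RInt_ge0' f a b : a <= b -> cont f -> (forall x, a <= x <= b -> 0 <= f x) -> 0 <= RInt f a b.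
Proof. intros. apply RInt_ge_0; auto; try (apply cont_ex; auto). intros; apply H1; lra. Qed.

Lemma exp_le_exp x y : x <= y -> exp x <= exp y.
Proof. intros [H|H]. left; apply exp_increasing; auto. subst; lra. Qed.

Lemma abspow_0 q : abspow 0 q = 0.
Proof. unfold abspow. destruct (Req_EM_T 0 0); [auto|contradiction]. Qed.
Lemma abspow_nz s q : s <> 0 -> abspow s q = Rpower (Rabs s) q.
Proof. intros H. unfold abspow. destruct (Req_EM_T s 0); [contradiction|auto]. Qed.
Lemma abspow_pos s q : s <> 0 -> 0 < abspow s q.
Proof. intros H. rewrite abspow_nz by auto. unfold Rpower. apply exp_pos. Qed.
Lemma abspow_ge0 s q : 0 <= abspow s q.
Proof. destruct (Req_EM_T s 0). subst; rewrite abspow_0; lra. left; apply abspow_pos; auto. Qed.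

Lemma abspow_split s p : s <> 0 -> abspow s (p + 1) = Rpower (Rabs s) (p - 1) * s ^ 2.
Proof.
  intros H. rewrite abspow_nz by auto.
  replace (p + 1) with ((p - 1) + INR 2) by (simpl; ring).
  rewrite Rpower_plus, Rpower_pow by (apply Rabs_pos_lt; auto).
  rewrite <- (pow2_abs s). auto.
Qed.

Lemma Rpower_le1 x q : 0 < x <= 1 -> 0 <= q -> Rpower x q <= 1.
Proof.
  intros Hx Hq. unfold Rpower. rewrite <- exp_0. apply exp_le_exp.
  assert (ln x <= 0) by (rewrite <- ln_1; apply ln_le; lra). nra.
Qed.

Lemma abspow_small s q : 1 <= q -> Rabs s <= 1 -> abspow s q <= Rabs s.
Proof.
  intros Hq Hs. destruct (Req_EM_T s 0).
  - subst. rewrite abspow_0, Rabs_R0; lra.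
  - rewrite abspow_nz by auto. assert (0 < Rabs s) by (apply Rabs_pos_lt; auto).
    replace q with (1 + (q - 1)) by ring. rewrite Rpower_plus, Rpower_1 by auto.
    pose proof (Rpower_le1 (Rabs s) (q - 1) ltac:(lra) ltac:(lra)).
    nra.
Qed.

Lemma abspow_cont q : 1 <= q -> cont (fun s => abspow s q).
Proof.
  intros Hq s. destruct (Req_EM_T s 0).
  - subst. unfold continuity_pt, continue_in, limit1_in, limit_in. intros eps Heps.
    exists (Rmin 1 eps). split. apply Rmin_pos; lra.
    intros x [_ Hx]. simpl in *. unfold R_dist in *. rewrite abspow_0.
    rewrite Rminus_0_r in *. rewrite Rabs_right by (apply Rle_ge, abspow_ge0).
    pose proof (Rmin_l 1 eps). pose proof (Rmin_r 1 eps).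
    pose proof (abspow_small x q Hq ltac:(lra)). lra.
  - apply continuity_pt_filterlim.
    change (continuous (fun s0 => abspow s0 q) s).
    apply (continuous_ext_loc (fun s0 => abspow s0 q) (fun s => exp (q * ln (Rabs s)))).
    + apply (loc_R s (Rabs s)). apply Rabs_pos_lt; auto.
      intros y Hy; cbv beta. rewrite abspow_nz. reflexivity.
      intros ->. rewrite Rminus_0_l, Rabs_Ropp in Hy. lra.
    + apply continuity_pt_filterlim.
      apply (continuity_pt_comp (fun s => q * ln (Rabs s)) exp).
      * apply continuity_pt_scal.
        apply (continuity_pt_comp Rabs ln). apply Rcontinuity_abs.
        apply derivable_continuous_pt. exists (/ Rabs s). apply derivable_pt_lim_ln. apply Rabs_pos_lt; auto.
      * apply derivable_continuous_pt, derivable_pt_exp.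
Qed.

Lemma cont_of_der (f f' : R -> R) : (forall x, is_derive f x (f' x)) -> cont f.
Proof. intros H x. apply continuity_pt_filterlim. apply (ex_derive_continuous (V := R_NormedModule) f). exists (f' x). apply H. Qed.

Lemma cont_plus f g : cont f -> cont g -> cont (fun x => f x + g x).
Proof. intros H1 H2 x. apply (continuity_pt_plus f g); auto. Qed.
Lemma cont_minus f g : cont f -> cont g -> cont (fun x => f x - g x).
Proof. intros H1 H2 x. apply (continuity_pt_minus f g); auto. Qed.
Lemma cont_mult f g : cont f -> cont g -> cont (fun x => f x * g x).
Proof. intros H1 H2 x. apply (continuity_pt_mult f g); auto. Qed.
Lemma cont_opp f : cont f -> cont (fun x => - f x).
Proof. intros H1 x. apply (continuity_pt_opp f); auto. Qed.
Lemma cont_const k : cont (fun _ => k).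
Proof. intros x. apply continuity_pt_const. intros ??; auto. Qed.
Lemma cont_id : cont (fun x => x).
Proof. intros x. apply derivable_continuous_pt, derivable_pt_id. Qed.
Lemma cont_comp f g : cont f -> cont g -> cont (fun x => g (f x)).
Proof. intros H1 H2 x. apply (continuity_pt_comp f g); auto. Qed.
Lemma cont_pow f n : cont f -> cont (fun x => f x ^ n).
Proof. intros H. induction n; simpl. apply cont_const. apply cont_mult; auto. Qed.
Lemma cont_cos : cont cos.
Proof. intros x; apply continuity_cos. Qed.
Lemma cont_sin : cont sin.
Proof. intros x; apply continuity_sin. Qed.
Lemma cont_abs f : cont f -> cont (fun x => Rabs (f x)).
Proof. intros H. apply (cont_comp f Rabs); auto. intros x; apply Rcontinuity_abs. Qed.

Ltac cont_tac :=
  repeat first [ apply cont_minus | apply cont_plus | apply cont_opp | apply cont_mult | apply cont_pow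
               | apply cont_const | apply cont_id | apply cont_cos | apply cont_sin ].

Lemma h1_cont : cont h1.
Proof. apply (cont_of_der _ h2). apply h1_der. Qed.
Lemma h2_cont' : cont h2.
Proof. intros x; apply h2_cont. Qed.
Lemma phi_cont : cont phi.
Proof. apply (cont_of_der _ phi1). apply phi_der. Qed.
Lemma phi1_cont : cont phi1.
Proof. apply (cont_of_der _ phi2). apply phi1_der. Qed.
Lemma phi2_cont : cont phi2.
Proof.
  unfold phi2. apply cont_plus. apply cont_mult. apply cont_const.
  apply (cont_comp (fun y => 1 - y^2) h1). cont_tac. apply h1_cont.
  apply cont_mult. cont_tac.
  apply (cont_comp (fun y => 1 - y^2) h2). cont_tac. apply h2_cont'.
Qed.

Lemma cont_scale g e : cont g -> cont (fun x => g (e * x)).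
Proof. intros H. apply (cont_comp (fun x => e * x) g); auto. cont_tac. Qed.

Lemma TU2_cont e xi w : cont (TU2 e xi w).
Proof.
  assert (Hc: cont (fun x => cos (xi*x+w))) by (apply (cont_comp (fun x => xi*x+w) cos); [cont_tac | apply cont_cos]).
  assert (Hs: cont (fun x => sin (xi*x+w))) by (apply (cont_comp (fun x => xi*x+w) sin); [cont_tac | apply cont_sin]).
  pose proof (cont_scale phi e phi_cont) as H0.
  pose proof (cont_scale phi1 e phi1_cont) as H1.
  pose proof (cont_scale phi2 e phi2_cont) as H2.
  unfold TU2.
  apply cont_minus; [apply cont_minus|].
  - apply cont_mult; [apply cont_mult; [apply cont_const| exact H2] | exact Hc].
  - apply cont_mult; [apply cont_mult; [apply cont_const| exact H1] | exact Hs].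
  - apply cont_mult; [apply cont_mult; [apply cont_const| exact H0] | exact Hc].
Qed.

Lemma phi_out y : 1 < Rabs y -> phi y = 0 /\ phi1 y = 0 /\ phi2 y = 0.
Proof.
  intros H. assert (1 - y^2 <= 0).
  { assert (1 < y^2). rewrite <- (pow2_abs y). nra. lra. }
  unfold phi, phi1, phi2, h0, h1, h2. rewrite Pp_neg by auto. repeat split; ring.
Qed.

Lemma phi_bnd y : Rabs (phi y) <= 1 /\ Rabs (phi1 y) <= 6 /\ Rabs (phi2 y) <= 30.
Proof.
  unfold phi, phi1, phi2, h0, h1, h2.
  destruct (Rle_dec (1 - y^2) 0).
  - rewrite Pp_neg by auto. repeat split; rewrite ?Rmult_0_l, ?Rmult_0_r, ?Rplus_0_r;
      simpl; rewrite ?Rmult_0_l, ?Rmult_0_r, ?Rplus_0_r, ?Rabs_R0; lra.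
  - rewrite Pp_pos by lra. remember (1 - y^2) as t eqn:Ht0.
    assert (Hy2 : y^2 <= 1) by nra.
    assert (Hay : Rabs y <= 1).
    { rewrite <- (pow2_abs y) in Hy2. pose proof (Rabs_pos y). nra. }
    assert (Ht : 0 < t <= 1) by nra.
    repeat split.
    + rewrite Rabs_right by (apply Rle_ge; apply pow_le; lra). simpl. nra.
    + replace (-2 * y * (3 * t ^ 2)) with (y * (-6 * t^2)) by ring.
      rewrite Rabs_mult, (Rabs_left1 (-6 * t^2)) by nra. pose proof (Rabs_pos y). nra.
    + eapply Rle_trans. apply Rabs_triang.
      rewrite (Rabs_left1 (-2*(3*t^2))) by nra. rewrite (Rabs_right (4*y^2*(6*t))) by nra. nra.
Qed.

Lemma phi_mid y : Rabs y <= 1/2 -> 27/64 <= phi y.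
Proof.
  intros H. unfold phi, h0. assert (y^2 <= 1/4).
  { rewrite <- (pow2_abs y). pose proof (Rabs_pos y). nra. }
  rewrite Pp_pos by lra. assert (3/4 <= 1 - y^2) by lra. nra.
Qed.

Lemma phi_0 : phi 0 = 1.
Proof. unfold phi, h0. rewrite Pp_pos; simpl; lra. Qed.

Lemma TU_adm e xi w : 0 < e -> cos w <> 0 -> admissible (TU e xi w) (TU1 e xi w) (TU2 e xi w).
Proof.
  intros He Hw. split; [|split; [|split; [|split]]].
  - intros x. apply is_derive_Reals, TU_der.
  - intros x. apply is_derive_Reals, TU1_der.
  - intros x. apply TU2_cont.
  - exists (/ e). intros x Hx. unfold TU.
    assert (1 < Rabs (e * x)).
    { rewrite Rabs_mult, Rabs_right by lra. apply (Rmult_lt_compat_l e) in Hx; auto.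
      rewrite Rinv_r in Hx; lra. }
    destruct (phi_out _ H) as [-> _]. ring.
  - exists 0. unfold TU. rewrite !Rmult_0_r, phi_0, Rplus_0_l, Rmult_1_l. auto.
Qed.

Lemma RInt_lin4 (f1 f2 f3 f4 : R -> R) k1 k2 k3 k4 a b :
  cont f1 -> cont f2 -> cont f3 -> cont f4 ->
  RInt (fun x => k1 * f1 x + k2 * f2 x + k3 * f3 x + k4 * f4 x) a b =
  k1 * RInt f1 a b + k2 * RInt f2 a b + k3 * RInt f3 a b + k4 * RInt f4 a b.
Proof.
  intros C1 C2 C3 C4.
  assert (E1 := RInt_add (fun x => k1 * f1 x + k2 * f2 x + k3 * f3 x) (fun x => k4 * f4 x) a b).
  assert (E2 := RInt_add (fun x => k1 * f1 x + k2 * f2 x) (fun x => k3 * f3 x) a b).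
  assert (E3 := RInt_add (fun x => k1 * f1 x) (fun x => k2 * f2 x) a b).
  cbv beta in E1, E2, E3.
  rewrite E1, E2, E3, !RInt_mulc; try reflexivity; apply cont_ex;
    repeat first [apply cont_plus | apply cont_mult | apply cont_const]; auto.
Qed.

Lemma adm_cont u u1 u2 : admissible u u1 u2 -> cont u /\ cont u1 /\ cont u2.
Proof.
  intros [H1 [H2 [H3 _]]]. split; [|split].
  - intros x. apply derivable_continuous_pt. exists (u1 x); apply H1.
  - intros x. apply derivable_continuous_pt. exists (u2 x); apply H2.
  - auto.
Qed.

Lemma zero_deriv (f f' : R -> R) L : (forall x, derivable_pt_lim f x (f' x)) ->
  (forall x, L < Rabs x -> f x = 0) -> forall x, L < Rabs x -> f' x = 0.
Proof.
  intros Hd Hz x Hx.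
  assert (H1 : is_derive f x 0).
  { apply (is_derive_ext_loc (fun _ : R => 0)).
    - apply (loc_R x (Rabs x - L)); [lra|]. intros y Hy; cbv beta. rewrite Hz. reflexivity.
      pose proof (Rabs_triang_inv x (x - y)). replace (x - (x - y)) with y in H by ring.
      rewrite <- Rabs_Ropp in Hy. replace (- (y - x)) with (x - y) in Hy by ring. lra.
    - auto_derive; try easy. }
  assert (H2 : is_derive f x (f' x)) by (apply is_derive_Reals; auto).
  apply is_derive_unique in H1. apply is_derive_unique in H2. rewrite <- H2, H1. reflexivity.
Qed.

Lemma adm_supp u u1 u2 : admissible u u1 u2 ->
  exists M, 1 < M /\ forall x, M - 1 < Rabs x -> u x = 0 /\ u1 x = 0 /\ u2 x = 0.
Proof.
  intros Ha. pose proof Ha as [H1 [H2 [H3 [[L HL] _]]]].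
  exists (Rabs L + 2). split. pose proof (Rabs_pos L); lra.
  assert (Hu : forall x, Rabs L < Rabs x -> u x = 0).
  { intros x Hx. apply HL. pose proof (Rle_abs L). lra. }
  pose proof (zero_deriv u u1 _ H1 Hu) as Hu1.
  pose proof (zero_deriv u1 u2 _ H2 Hu1) as Hu2.
  intros x Hx. repeat split; [apply Hu|apply Hu1|apply Hu2]; lra.
Qed.

Lemma Fcont p u : 1 < p -> cont u -> cont (fun x => Fprim p (u x)).
Proof.
  intros Hp Hu. unfold Fprim. unfold Rdiv.
  apply cont_mult; [|apply cont_const].
  apply (cont_comp u (fun s => abspow s (p + 1))); auto. apply abspow_cont. lra.
Qed.

Lemma Kpos p u u1 u2 Fv : 1 < p -> admissible u u1 u2 -> IntR (fun x => Fprim p (u x)) Fv -> 0 < Fv.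
Proof.
  intros Hp Ha HF.
  destruct (adm_cont _ _ _ Ha) as [Cu _].
  destruct (adm_supp _ _ _ Ha) as [M [HM Hs]].
  pose proof (Fcont p u Hp Cu) as CF.
  rewrite (IntR_val _ _ M HF CF) by (try lra; intros x Hx; destruct (Hs x) as [-> _]; try lra;
     unfold Fprim; rewrite abspow_0; lra).
  destruct Ha as [_ [_ [_ [_ [x0 Hx0]]]]].
  assert (Hx0M : Rabs x0 <= M - 1).
  { destruct (Rle_dec (Rabs x0) (M - 1)); auto. destruct (Hs x0) as [? _]; [lra|contradiction]. }
  assert (Hux : 0 < Rabs (u x0)) by (apply Rabs_pos_lt; auto).
  destruct (Cu x0 (Rabs (u x0)) (Rlt_gt _ _ Hux)) as [al [Hal Hcl]].
  set (r := Rmin al 1 / 2).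
  assert (Hr : 0 < r /\ r < al /\ r <= 1/2).
  { unfold r. pose proof (Rmin_l al 1). pose proof (Rmin_r al 1).
    assert (0 < Rmin al 1) by (apply Rmin_pos; lra). lra. }
  assert (Hnz : forall x, Rabs (x - x0) < al -> u x <> 0).
  { intros x Hx Hux0. destruct (Req_dec x x0). subst; contradiction.
    assert (HH := Hcl x (conj (conj I (not_eq_sym H)) Hx)). simpl in HH. unfold R_dist in HH.
    rewrite Hux0, Rminus_0_l, Rabs_Ropp in HH. lra. }
  apply Rabs_le_between in Hx0M.
  assert (Ex : forall a b, ex_RInt (fun x => Fprim p (u x)) a b) by (intros; apply cont_ex; auto).
  rewrite <- (RInt_Chasles _ (-M) (x0 - r) M) by auto.
  rewrite <- (RInt_Chasles _ (x0 - r) (x0 + r) M) by auto.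
  assert (0 <= RInt (fun x => Fprim p (u x)) (- M) (x0 - r)).
  { apply RInt_ge0'; auto; try lra. intros; unfold Fprim; apply Rmult_le_pos.
    apply abspow_ge0. left; apply Rinv_0_lt_compat; lra. }
  assert (0 <= RInt (fun x => Fprim p (u x)) (x0 + r) M).
  { apply RInt_ge0'; auto; try lra. intros; unfold Fprim; apply Rmult_le_pos.
    apply abspow_ge0. left; apply Rinv_0_lt_compat; lra. }
  assert (0 < RInt (fun x => Fprim p (u x)) (x0 - r) (x0 + r)).
  { apply RInt_gt_0; try lra.
    - intros x Hx. unfold Fprim. apply Rdiv_lt_0_compat; [|lra]. apply abspow_pos. apply Hnz.
      apply Rabs_def1; lra.
    - intros; apply cont_continuous; auto. }
  change (0 < RInt (fun x => Fprim p (u x)) (- M) (x0 - r) +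
     (RInt (fun x => Fprim p (u x)) (x0 - r) (x0 + r) + RInt (fun x => Fprim p (u x)) (x0 + r) M)).
  lra.
Qed.

Lemma Rpower2 x : 0 < x -> Rpower x 2 = x ^ 2.
Proof. intros H. replace 2 with (INR 2) by (simpl; ring). apply Rpower_pow; auto. Qed.

Lemma pw_K p v S : 1 < p -> 0 < S -> v ^ 2 <= S -> abspow v (p + 1) <= Rpower S ((p - 1) / 2) * v ^ 2.
Proof.
  intros Hp HS Hv. destruct (Req_EM_T v 0) as [->|Hnz].
  - rewrite abspow_0. simpl. rewrite Rmult_0_l, Rmult_0_r. lra.
  - rewrite abspow_split by auto. apply Rmult_le_compat_r. apply pow2_ge_0.
    assert (Ha : 0 < Rabs v) by (apply Rabs_pos_lt; auto).
    replace (Rpower (Rabs v) (p - 1)) with (Rpower (Rpower (Rabs v) 2) ((p - 1) / 2)).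
    + rewrite Rpower2, pow2_abs by auto. apply Rle_Rpower_l. lra. split; auto.
      assert (v * v > 0) by (apply Rsqr_pos_lt; auto). simpl; nra.
    + rewrite Rpower_mult. f_equal. field.
Qed.

Lemma der_adm u u1 u2 : admissible u u1 u2 ->
  (forall x, is_derive u x (u1 x)) /\ (forall x, is_derive u1 x (u2 x)).
Proof. intros [H1 [H2 _]]. split; intros x; apply is_derive_Reals; auto. Qed.

Lemma lower p beta c : 1 < p -> 0 < 1 - c ^ 2 -> Rmax beta 0 < 2 * sqrt (1 - c ^ 2) ->
  exists a, 0 < a /\ forall r, quotients p beta c r -> a <= r.
Proof.
  intros Hp Hq Hb.
  set (q := 1 - c ^ 2) in *.
  set (s := sqrt q) in *.
  assert (Hs : 0 < s) by (apply sqrt_lt_R0; auto).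
  assert (Hs2 : s * s = q) by (apply sqrt_sqrt; lra).
  set (bp := Rmax beta 0) in *.
  assert (Hbp : 0 <= bp /\ beta <= bp) by (split; [apply Rmax_r|apply Rmax_l]).
  set (w := bp / (2 * s)).
  assert (Hw : 0 <= w < 1 /\ bp = 2 * s * w).
  { unfold w. split; [split|].
    apply Rdiv_le_0_compat; lra.
    apply (Rmult_lt_reg_r (2 * s)); [lra|]. unfold Rdiv; rewrite Rmult_assoc, Rinv_l; lra.
    field; lra. }
  set (m0 := Rmin 1 q).
  assert (Hm0 : 0 < m0 /\ m0 <= 1 /\ m0 <= q) by (unfold m0; split; [apply Rmin_pos; lra| split; [apply Rmin_l|apply Rmin_r]]).
  exists ((1 - w) * m0 * (2 / 3)). split. apply Rmult_lt_0_compat; [apply Rmult_lt_0_compat|]; lra.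
  intros r [u [u1 [u2 [Iv [Fv [Ha [HI [HF Hr]]]]]]]].
  pose proof (Kpos p u u1 u2 Fv Hp Ha HF) as HFv.
  destruct (adm_cont _ _ _ Ha) as [Cu [Cu1 Cu2]].
  destruct (adm_supp _ _ _ Ha) as [M [HM Hsupp]].
  destruct (der_adm _ _ _ Ha) as [Du Du1].
  assert (C2 : cont (fun x => u2 x ^ 2)) by (apply cont_pow; auto).
  assert (C1 : cont (fun x => u1 x ^ 2)) by (apply cont_pow; auto).
  assert (C0 : cont (fun x => u x ^ 2)) by (apply cont_pow; auto).
  assert (Cm : cont (fun x => u x * u2 x)) by (apply cont_mult; auto).
  set (A := RInt (fun x => u2 x ^ 2) (-M) M).
  set (D := RInt (fun x => u1 x ^ 2) (-M) M).
  set (B := RInt (fun x => u x ^ 2) (-M) M).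
  set (E := RInt (fun x => u x * u2 x) (-M) M).
  assert (HIv : Iv = A - beta * D + q * B).
  { rewrite (IntR_val _ _ M HI).
    - rewrite (RInt_ext _ (fun x => 1 * (u2 x ^ 2) + (-beta) * (u1 x ^ 2) + q * (u x ^ 2) + 0 * (u x * u2 x)))
        by (intros; unfold q; rr; ring).
      rewrite RInt_lin4 by auto. unfold A, B, D. ring.
    - apply cont_plus; [apply cont_minus|]; auto; apply cont_mult; auto; apply cont_const.
    - lra.
    - intros x Hx. destruct (Hsupp x) as [-> [-> ->]]; [lra|]. ring. }
  assert (HDE : D + E = 0).
  { assert (H := is_RInt_derive (fun x => u x * u1 x) (fun x => u1 x ^ 2 + u x * u2 x) (-M) M).
    destruct (Hsupp M) as [HuM [Hu1M _]]. rewrite Rabs_right; lra.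
    destruct (Hsupp (-M)) as [HuM' [Hu1M' _]]. rewrite Rabs_left; lra.
    cbv beta in H. rewrite HuM, Hu1M, HuM', Hu1M' in H.
    apply is_RInt_unique in H.
    - rewrite (RInt_ext _ (fun x => 0 * (u2 x ^ 2) + 1 * (u1 x ^ 2) + 0 * (u x ^ 2) + 1 * (u x * u2 x))) in H
        by (intros; rr; ring).
      rewrite RInt_lin4 in H by auto. unfold D, E.
      assert (HH : forall z : R, z = minus (0 * 0) (0 * 0) -> z = 0).
      { intros z Hz. rewrite Hz. unfold minus, plus, opp; simpl. ring. }
      apply HH in H. lra.
    - intros x _. auto_derive.
      + split; [exists (u1 x); apply Du|]. split; [exists (u2 x); apply Du1|]. auto.
      + rewrite (is_derive_unique (fun y : R => u y) x _ (Du x)), (is_derive_unique (fun y : R => u1 y) x _ (Du1 x)). rr; ring.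
    - intros x _. apply cont_continuous. apply cont_plus; auto. }
  assert (Hineq : forall t, 0 <= A + t ^ 2 * B + 2 * t * E).
  { intros t. replace (A + t ^ 2 * B + 2 * t * E) with
      (1 * A + 0 * D + t ^ 2 * B + (2 * t) * E) by ring.
    unfold A, B, D, E. rewrite <- RInt_lin4 by auto.
    apply RInt_ge0'; try lra.
    - apply cont_plus; [apply cont_plus; [apply cont_plus|]|]; apply cont_mult; auto; apply cont_const.
    - intros x _. pose proof (pow2_ge_0 (u2 x + t * u x)). nra. }
  assert (HA : 0 <= A) by (apply RInt_ge0'; auto; try lra; intros; nra).
  assert (HB : 0 <= B) by (apply RInt_ge0'; auto; try lra; intros; nra).
  assert (HD : 0 <= D) by (apply RInt_ge0'; auto; try lra; intros; nra).
  set (S := B + D).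
  assert (HS : forall x, u x ^ 2 <= S).
  { intros x. destruct (Rle_dec (Rabs x) (M - 1)) as [Hx|Hx].
    2: { destruct (Hsupp x) as [-> _]; [lra|]. unfold S. simpl. lra. }
    apply Rabs_le_between in Hx.
    assert (H := is_RInt_derive (fun t => u t ^ 2) (fun t => 2 * u t * u1 t) (-M) x).
    destruct (Hsupp (-M)) as [HuM' _]. rewrite Rabs_left; lra.
    cbv beta in H. rewrite HuM' in H. apply is_RInt_unique in H.
    - assert (HH : forall z y : R, z = minus y (0 ^ 2) -> y = z).
      { intros z y Hz. rewrite Hz. unfold minus, plus, opp; simpl. ring. }
      apply HH in H. rewrite H.
      apply Rle_trans with (RInt (fun t => 0 * (u2 t ^ 2) + 1 * (u1 t ^ 2) + 1 * (u t ^ 2) + 0 * (u t * u2 t)) (-M) x).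
      + apply RInt_le'; try lra.
        * apply cont_mult; auto. apply cont_mult; auto. apply cont_const.
        * apply cont_plus; [apply cont_plus; [apply cont_plus|]|]; apply cont_mult; auto; apply cont_const.
        * intros t _. pose proof (pow2_ge_0 (u t - u1 t)). nra.
      + assert (Cg : cont (fun t => 0 * (u2 t ^ 2) + 1 * (u1 t ^ 2) + 1 * (u t ^ 2) + 0 * (u t * u2 t))).
        { apply cont_plus; [apply cont_plus; [apply cont_plus|]|]; apply cont_mult; auto; apply cont_const. }
        assert (Hch := RInt_Chasles _ (-M) x M (cont_ex _ _ _ Cg) (cont_ex _ _ _ Cg)).
        assert (0 <= RInt (fun t => 0 * (u2 t ^ 2) + 1 * (u1 t ^ 2) + 1 * (u t ^ 2) + 0 * (u t * u2 t)) x M).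
        { apply RInt_ge0'; auto; try lra. intros; nra. }
        rewrite (RInt_lin4 _ _ _ _ 0 1 1 0 (-M) M) in Hch by auto. fold A B D E in Hch. unfold S.
        change (plus (RInt (fun t : R => 0 * u2 t ^ 2 + 1 * u1 t ^ 2 + 1 * u t ^ 2 + 0 * (u t * u2 t)) (- M) x)
          (RInt (fun t : R => 0 * u2 t ^ 2 + 1 * u1 t ^ 2 + 1 * u t ^ 2 + 0 * (u t * u2 t)) x M))
          with (RInt (fun t : R => 0 * u2 t ^ 2 + 1 * u1 t ^ 2 + 1 * u t ^ 2 + 0 * (u t * u2 t)) (- M) x +
          RInt (fun t : R => 0 * u2 t ^ 2 + 1 * u1 t ^ 2 + 1 * u t ^ 2 + 0 * (u t * u2 t)) x M) in Hch.
        lra.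
    - intros t _. auto_derive.
      + exists (u1 t); apply Du.
      + rewrite (is_derive_unique (fun y : R => u y) t _ (Du t)). rr; ring.
    - intros t _. apply cont_continuous. apply cont_mult; auto. apply cont_mult; auto. apply cont_const. }
  assert (HSpos : 0 < S).
  { destruct Ha as [_ [_ [_ [_ [x0 Hx0]]]]]. specialize (HS x0).
    assert (0 < u x0 ^ 2) by (apply pow_lt; auto; fail) || (assert (u x0 * u x0 > 0) by (apply Rsqr_pos_lt; auto); simpl; nra).
    lra. }
  set (K := (p + 1) * Fv).
  assert (HK : K <= Rpower S ((p - 1) / 2) * B).
  { unfold K. rewrite (IntR_val _ _ M HF (Fcont p u Hp Cu)).
    - rewrite <- RInt_mulc by (apply cont_ex; apply Fcont; auto). unfold B. rewrite <- RInt_mulc by (apply cont_ex; auto).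
      apply RInt_le'; try lra.
      + apply cont_mult. apply cont_const. apply Fcont; auto.
      + apply cont_mult. apply cont_const. auto.
      + intros x _. unfold Fprim. replace ((p + 1) * (abspow (u x) (p + 1) / (p + 1))) with (abspow (u x) (p + 1))
          by (field; lra). apply pw_K; auto.
    - lra.
    - intros x Hx. destruct (Hsupp x) as [-> _]; [lra|]. unfold Fprim. rewrite abspow_0. lra. }
  assert (HKpos : 0 < K) by (unfold K; nra).
  assert (HKS : Rpower K (2 / (p + 1)) <= S).
  { assert (HB' : B <= S) by (unfold S; lra).
    assert (Hrp : 0 < Rpower S ((p - 1) / 2)) by (unfold Rpower; apply exp_pos).
    assert (K <= Rpower S ((p + 1) / 2)).
    { replace ((p + 1) / 2) with ((p - 1) / 2 + 1) by field. rewrite Rpower_plus, Rpower_1 by auto. nra. }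
    apply Rle_trans with (Rpower (Rpower S ((p + 1) / 2)) (2 / (p + 1))).
    - apply Rle_Rpower_l. left; apply Rdiv_lt_0_compat; lra. lra.
    - rewrite Rpower_mult. replace ((p + 1) / 2 * (2 / (p + 1))) with 1 by (field; lra).
      rewrite Rpower_1 by auto. lra. }
  assert (HP : 0 < Rpower K (2 / (p + 1))) by (unfold Rpower; apply exp_pos).
  assert (HIvS : (1 - w) * m0 * (2 / 3) * S <= Iv).
  { destruct Hw as [[Hw0 Hw1] Hbpw].
    pose proof (Hineq s) as H1. pose proof (Hineq 1) as H2.
    assert (Hq' : s ^ 2 = q) by (simpl; lra).
    rewrite Hq' in H1. replace E with (- D) in H1, H2 by lra.
    assert (beta * D <= bp * D) by nra.
    assert (bp * D <= w * (A + q * B)) by (rewrite Hbpw; nra).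
    assert ((1 - w) * (A + q * B) <= Iv) by (rewrite HIv; nra).
    assert (m0 * (A + B) <= A + q * B) by nra.
    assert (2 / 3 * S <= A + B) by (unfold S; lra).
    assert (0 <= 1 - w) by lra.
    assert ((1 - w) * (m0 * (A + B)) <= (1 - w) * (A + q * B)) by (apply Rmult_le_compat_l; lra).
    assert ((1 - w) * m0 * (2 / 3 * S) <= (1 - w) * m0 * (A + B)) by (apply Rmult_le_compat_l; nra).
    nra. }
  rewrite Hr. fold K. apply (Rmult_le_reg_r (Rpower K (2 / (p + 1)))); auto.
  replace (Iv / Rpower K (2 / (p + 1)) * Rpower K (2 / (p + 1))) with Iv by (field; lra).
  assert (0 < (1 - w) * m0 * (2 / 3)) by (destruct Hw as [[? ?] _]; apply Rmult_lt_0_compat; [apply Rmult_lt_0_compat|]; lra).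
  nra.
Qed.

Lemma IntR_of_cont g L : 0 < L -> cont g -> (forall x, L < Rabs x -> g x = 0) -> IntR g (RInt g (-L) L).
Proof.
  intros HL Hc Hs. exists L. split; auto. split; auto.
  exists (ex_RInt_Reals_0 _ _ _ (cont_ex g (-L) L Hc)). rewrite <- RInt_Reals. reflexivity.
Qed.

Lemma glb_facts p beta c a r0 : 0 < a -> (forall r, quotients p beta c r -> a <= r) ->
  quotients p beta c r0 ->
  a <= m_inf p beta c /\ forall r, quotients p beta c r -> m_inf p beta c <= r.
Proof.
  intros Ha Hlow Hr0.
  assert (Hex : exists m, is_glb (quotients p beta c) m).
  { destruct (completeness (fun x => quotients p beta c (- x))) as [m [Hm1 Hm2]].
    - exists (- a). intros x Hx. apply Hlow in Hx. lra.
    - exists (- r0). rewrite Ropp_involutive. auto.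
    - exists (- m). split.
      + intros x Hx. assert (- x <= m) by (apply Hm1; rewrite Ropp_involutive; auto). lra.
      + intros b Hb. assert (m <= - b). { apply Hm2. intros x Hx. apply Hb in Hx. lra. } lra. }
  pose proof (@epsilon_spec R (inhabits 0) _ Hex) as [H1 H2].
  unfold m_inf, Rinf. split; auto.
Qed.

Lemma TU_cont e xi w : cont (TU e xi w).
Proof. apply (cont_of_der _ (TU1 e xi w)). apply TU_der. Qed.
Lemma TU1_cont e xi w : cont (TU1 e xi w).
Proof. apply (cont_of_der _ (TU2 e xi w)). apply TU1_der. Qed.

Lemma TU_out e xi w x : 0 < e -> / e < Rabs x -> TU e xi w x = 0 /\ TU1 e xi w x = 0 /\ TU2 e xi w x = 0.
Proof.
  intros He Hx.
  assert (1 < Rabs (e * x)).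
  { rewrite Rabs_mult, Rabs_right by lra. apply (Rmult_lt_compat_l e) in Hx; auto.
    rewrite Rinv_r in Hx; lra. }
  destruct (phi_out _ H) as [H0 [H1 H2]]. unfold TU, TU1, TU2. rewrite H0, H1, H2. repeat split; ring.
Qed.

Definition Ig (beta c : R) (u u1 u2 : R -> R) (x : R) := u2 x ^ 2 - beta * u1 x ^ 2 + (1 - c ^ 2) * u x ^ 2.

Lemma shift_cs a : cos (a - PI / 2) = sin a /\ sin (a - PI / 2) = - cos a.
Proof. rewrite cos_minus, sin_minus, cos_PI2, sin_PI2. split; ring. Qed.

Lemma pw_I beta c e xi cs x : 0 < e <= 1 -> xi ^ 2 = Rmax beta 0 / 2 ->
  cs ^ 2 = 1 - Rmax beta 0 ^ 2 / 4 -> c ^ 2 <= cs ^ 2 ->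
  Ig beta c (TU e xi (PI/4)) (TU1 e xi (PI/4)) (TU2 e xi (PI/4)) x +
  Ig beta c (TU e xi (-(PI/4))) (TU1 e xi (-(PI/4))) (TU2 e xi (-(PI/4))) x
  <= e ^ 2 * (900 + 60 * xi ^ 2 + 36 * (4 * xi ^ 2 + Rabs beta)) + (cs ^ 2 - c ^ 2).
Proof.
  intros He Hxi Hcs Hc.
  unfold Ig, TU, TU1, TU2.
  replace (xi * x + - (PI / 4)) with ((xi * x + PI / 4) - PI / 2) by field.
  destruct (shift_cs (xi * x + PI / 4)) as [-> ->].
  set (a := xi * x + PI / 4).
  set (F0 := phi (e * x)). set (F1 := phi1 (e * x)). set (F2 := phi2 (e * x)).
  destruct (phi_bnd (e * x)) as [B0 [B1 B2]]. fold F0 F1 F2 in B0, B1, B2.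
  pose proof (sin2_cos2 a) as Hsc. unfold Rsqr in Hsc.
  set (bp := Rmax beta 0) in *.
  assert (Hbb : beta * bp = bp ^ 2) by (unfold bp, Rmax; destruct (Rle_dec beta 0); simpl; ring).
  set (EE := (e ^ 2 * F2 - xi ^ 2 * F0) ^ 2 + 4 * xi ^ 2 * e ^ 2 * F1 ^ 2
             - beta * (e ^ 2 * F1 ^ 2 + xi ^ 2 * F0 ^ 2) + (1 - c ^ 2) * F0 ^ 2).
  match goal with |- ?L <= _ => replace L with ((sin a * sin a + cos a * cos a) * EE) by (unfold EE; ring) end.
  rewrite Hsc, Rmult_1_l.
  assert (HE : EE = e ^ 4 * F2 ^ 2 - 2 * e ^ 2 * xi ^ 2 * (F0 * F2) + (4 * xi ^ 2 - beta) * e ^ 2 * F1 ^ 2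
                    + (cs ^ 2 - c ^ 2) * F0 ^ 2).
  { unfold EE. rewrite Hcs, Hxi.
    assert (Hbb' : beta * bp * F0^2 = bp^2 * F0^2) by (rewrite Hbb; ring).
    lra. }
  rewrite HE.
  assert (He2 : 0 < e ^ 2 <= 1) by (split; [apply pow_lt; lra| simpl; nra]).
  assert (T1 : e ^ 4 * F2 ^ 2 <= e ^ 2 * 900).
  { assert (F2 ^ 2 <= 900) by (rewrite <- (pow2_abs F2); pose proof (Rabs_pos F2); nra).
    replace (e ^ 4 * F2 ^ 2) with (e^2 * (e^2 * F2^2)) by ring. assert (0 <= F2^2) by apply pow2_ge_0.
    assert (e^2 * F2^2 <= 900) by nra. apply Rmult_le_compat_l; lra. }
  assert (T2 : - 2 * e ^ 2 * xi ^ 2 * (F0 * F2) <= e ^ 2 * (60 * xi ^ 2)).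
  { assert (Rabs (F0 * F2) <= 30) by (rewrite Rabs_mult; pose proof (Rabs_pos F0); pose proof (Rabs_pos F2); nra).
    assert (- (F0 * F2) <= 30) by (pose proof (Rle_abs (- (F0*F2))) as HH; rewrite Rabs_Ropp in HH; lra).
    assert (0 <= xi ^ 2) by apply pow2_ge_0.
    assert (0 <= e^2 * xi^2) by nra.
    replace (- 2 * e ^ 2 * xi ^ 2 * (F0 * F2)) with (2 * (e^2 * xi^2) * (- (F0 * F2))) by ring. nra. }
  assert (T3 : (4 * xi ^ 2 - beta) * e ^ 2 * F1 ^ 2 <= e ^ 2 * (36 * (4 * xi ^ 2 + Rabs beta))).
  { assert (F1 ^ 2 <= 36) by (rewrite <- (pow2_abs F1); pose proof (Rabs_pos F1); nra).
    assert (0 <= F1 ^ 2) by apply pow2_ge_0. pose proof (Rle_abs (- beta)) as HH. rewrite Rabs_Ropp in HH. pose proof (Rabs_pos beta).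
    assert (0 <= xi ^ 2) by apply pow2_ge_0.
    assert ((4 * xi ^ 2 - beta) * F1 ^ 2 <= (4 * xi ^ 2 + Rabs beta) * F1 ^ 2) by (apply Rmult_le_compat_r; lra).
    assert ((4 * xi ^ 2 + Rabs beta) * F1 ^ 2 <= (4 * xi ^ 2 + Rabs beta) * 36) by (apply Rmult_le_compat_l; lra).
    replace ((4 * xi ^ 2 - beta) * e ^ 2 * F1 ^ 2) with (e^2 * ((4 * xi ^ 2 - beta) * F1 ^ 2)) by ring.
    apply Rmult_le_compat_l; lra. }
  assert (T4 : (cs ^ 2 - c ^ 2) * F0 ^ 2 <= cs ^ 2 - c ^ 2).
  { assert (F0 ^ 2 <= 1) by (rewrite <- (pow2_abs F0); pose proof (Rabs_pos F0); nra).
    assert (0 <= F0 ^ 2) by apply pow2_ge_0. nra. }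
  lra.
Qed.

Lemma pw_low p a : 1 < p ->
  Rpower (1/7) (p - 1) * a ^ 2 <= abspow a (p + 1) + Rpower (1/7) (p - 1) * (1/7) ^ 2.
Proof.
  intros Hp. assert (He : 0 < Rpower (1/7) (p - 1)) by (unfold Rpower; apply exp_pos).
  pose proof (abspow_ge0 a (p + 1)).
  destruct (Rle_dec (Rabs a) (1/7)).
  - assert (a ^ 2 <= (1/7)^2) by (rewrite <- (pow2_abs a); pose proof (Rabs_pos a); nra). nra.
  - assert (a <> 0) by (intros ->; rewrite Rabs_R0 in n; lra).
    rewrite abspow_split by auto.
    assert (Rpower (1/7) (p - 1) <= Rpower (Rabs a) (p - 1)) by (apply Rle_Rpower_l; lra).
    assert (0 <= a ^ 2) by apply pow2_ge_0. nra.
Qed.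

Lemma phi_int e : 0 < e -> / e / 6 <= RInt (fun x => phi (e * x) ^ 2) (- / e) (/ e).
Proof.
  intros He. set (L := / e). assert (HL : 0 < L) by (apply Rinv_0_lt_compat; auto).
  assert (Cg : cont (fun x => phi (e * x) ^ 2)) by (apply cont_pow; apply cont_scale; apply phi_cont).
  rewrite <- (RInt_Chasles _ (-L) (-(L/2)) L) by (apply cont_ex; auto).
  rewrite <- (RInt_Chasles _ (-(L/2)) (L/2) L) by (apply cont_ex; auto).
  assert (0 <= RInt (fun x => phi (e * x) ^ 2) (- L) (- (L / 2))) by (apply RInt_ge0'; auto; try lra; intros; apply pow2_ge_0).
  assert (0 <= RInt (fun x => phi (e * x) ^ 2) (L / 2) L) by (apply RInt_ge0'; auto; try lra; intros; apply pow2_ge_0).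
  assert (L / 6 <= RInt (fun x => phi (e * x) ^ 2) (- (L / 2)) (L / 2)).
  { apply Rle_trans with (RInt (fun _ => 1 / 6) (- (L / 2)) (L / 2)).
    - rewrite RInt_cst. lra.
    - apply RInt_le'; auto; try lra. apply cont_const.
      intros x Hx. assert (Rabs (e * x) <= 1 / 2).
      { rewrite Rabs_mult, Rabs_right by lra. apply Rabs_le_between in Hx.
        replace (1/2) with (e * (L/2)) by (unfold L; field; lra). apply Rmult_le_compat_l; lra. }
      apply phi_mid in H1. nra. }
  change (L / 6 <= RInt (fun x => phi (e * x) ^ 2) (- L) (- (L / 2)) +
     (RInt (fun x => phi (e * x) ^ 2) (- (L / 2)) (L / 2) + RInt (fun x => phi (e * x) ^ 2) (L / 2) L)).
  lra.
Qed.

Lemma Ig_cont beta c e xi w : cont (Ig beta c (TU e xi w) (TU1 e xi w) (TU2 e xi w)).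
Proof.
  unfold Ig. apply cont_plus; [apply cont_minus|].
  - apply cont_pow, TU2_cont.
  - apply cont_mult; [apply cont_const| apply cont_pow, TU1_cont].
  - apply cont_mult; [apply cont_const| apply cont_pow, TU_cont].
Qed.

Lemma Ig_out beta c e xi w x : 0 < e -> / e < Rabs x -> Ig beta c (TU e xi w) (TU1 e xi w) (TU2 e xi w) x = 0.
Proof. intros He Hx. unfold Ig. destruct (TU_out e xi w x He Hx) as [-> [-> ->]]. ring. Qed.

Lemma F_out p e xi w x : 0 < e -> / e < Rabs x -> Fprim p (TU e xi w x) = 0.
Proof. intros He Hx. destruct (TU_out e xi w x He Hx) as [-> _]. unfold Fprim. rewrite abspow_0. lra. Qed.

Lemma TU_quot p beta c e xi w : 1 < p -> 0 < e -> cos w <> 0 ->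
  quotients p beta c
    (RInt (Ig beta c (TU e xi w) (TU1 e xi w) (TU2 e xi w)) (- / e) (/ e) /
     Rpower ((p + 1) * RInt (fun x => Fprim p (TU e xi w x)) (- / e) (/ e)) (2 / (p + 1))).
Proof.
  intros Hp He Hw. assert (HL : 0 < / e) by (apply Rinv_0_lt_compat; auto).
  exists (TU e xi w), (TU1 e xi w), (TU2 e xi w),
    (RInt (Ig beta c (TU e xi w) (TU1 e xi w) (TU2 e xi w)) (- / e) (/ e)),
    (RInt (fun x => Fprim p (TU e xi w x)) (- / e) (/ e)).
  split; [apply TU_adm; auto|]. split; [|split; [|reflexivity]].
  - apply (IntR_of_cont (Ig beta c (TU e xi w) (TU1 e xi w) (TU2 e xi w))); auto.
    apply Ig_cont. intros; apply Ig_out; auto.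
  - apply IntR_of_cont; auto. apply Fcont; auto. apply TU_cont. intros; apply F_out; auto.
Qed.

Lemma K_abspow p e xi w : 1 < p ->
  (p + 1) * RInt (fun x => Fprim p (TU e xi w x)) (- / e) (/ e) =
  RInt (fun x => abspow (TU e xi w x) (p + 1)) (- / e) (/ e).
Proof.
  intros Hp. rewrite <- RInt_mulc by (apply cont_ex, Fcont, TU_cont; auto).
  apply RInt_ext. intros x _. unfold Fprim. rr. field. lra.
Qed.

Theorem mainTheorem15 (p beta : R) (hp : 1 < p) (hbeta : beta < 2) :
  exists C delta : R, 0 < C /\ 0 < delta /\
    forall c : R, c_star beta - delta < c < c_star beta ->
      Rabs (d_val p beta c) <=
        C * Rpower (c_star beta - c) ((p + 3) / (2 * (p - 1))).
Proof.
  set (bp := Rmax beta 0).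
  assert (Hbp : 0 <= bp < 2) by (unfold bp, Rmax; destruct (Rle_dec beta 0); lra).
  assert (Hcsq : 0 < 1 - bp ^ 2 / 4) by nra.
  set (cs := c_star beta).
  assert (Hcs_def : cs = sqrt (1 - bp ^ 2 / 4)) by reflexivity.
  assert (Hcs2 : cs ^ 2 = 1 - bp ^ 2 / 4) by (rewrite Hcs_def; apply pow2_sqrt; lra).
  assert (Hcs0 : 0 < cs) by (rewrite Hcs_def; apply sqrt_lt_R0; lra).
  assert (Hcs1 : cs <= 1) by (rewrite Hcs_def; apply Rle_trans with (sqrt 1); [apply sqrt_le_1; nra | rewrite sqrt_1; lra]).
  set (xi := sqrt (bp / 2)).
  assert (Hxi : xi ^ 2 = bp / 2) by (apply pow2_sqrt; lra).
  set (K1 := 900 + 60 * xi ^ 2 + 36 * (4 * xi ^ 2 + Rabs beta)).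
  assert (HK1 : 0 < K1) by (unfold K1; pose proof (pow2_ge_0 xi); pose proof (Rabs_pos beta); lra).
  set (e0 := Rpower (1/7) (p - 1)).
  assert (He0 : 0 < e0) by (unfold e0, Rpower; apply exp_pos).
  set (th := 2 / (p + 1)).
  assert (Hth : 0 < th) by (unfold th; apply Rdiv_lt_0_compat; lra).
  set (rrr := (p + 1) / (p - 1)).
  assert (Hrr : 0 < rrr) by (unfold rrr; apply Rdiv_lt_0_compat; lra).
  set (G := 2 * (K1 + 2)).
  set (H := e0 / 24).
  assert (HG : 0 < G) by (unfold G; lra).
  assert (HH : 0 < H) by (unfold H; lra).
  set (k := (p - 1) / (2 * (p + 1))).
  assert (Hk : 0 < k) by (unfold k; apply Rdiv_lt_0_compat; lra).
  exists (k * exp (rrr * (ln G - th * ln H))), cs.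
  split; [apply Rmult_lt_0_compat; [auto| apply exp_pos]|]. split; [auto|].
  intros c [Hc1 Hc2].
  set (X := cs - c).
  assert (HX : 0 < X < 1) by (unfold X; lra).
  set (e := sqrt X).
  assert (He2 : e ^ 2 = X) by (apply pow2_sqrt; lra).
  assert (He : 0 < e) by (apply sqrt_lt_R0; lra).
  assert (He1 : e <= 1) by (unfold e; apply Rle_trans with (sqrt 1); [apply sqrt_le_1; lra | rewrite sqrt_1; lra]).
  assert (Hq : 0 < 1 - c ^ 2) by nra.
  assert (Hlow : Rmax beta 0 < 2 * sqrt (1 - c ^ 2)).
  { fold bp. assert (bp / 2 < sqrt (1 - c ^ 2)).
    { rewrite <- (sqrt_square (bp / 2)) by lra. apply sqrt_lt_1; nra. }
    lra. }
  destruct (lower p beta c hp Hq Hlow) as [a [Ha Hla]].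
  assert (Hcw : cos (PI / 4) <> 0).
  { rewrite cos_PI4. assert (0 < sqrt 2) by (apply sqrt_lt_R0; lra).
    apply Rgt_not_eq. apply Rdiv_lt_0_compat; lra. }
  assert (Hcw' : cos (- (PI / 4)) <> 0) by (rewrite cos_neg; auto).
  pose proof (TU_quot p beta c e xi (PI / 4) hp He Hcw) as Qu.
  pose proof (TU_quot p beta c e xi (- (PI / 4)) hp He Hcw') as Qv.
  set (L := / e) in *.
  assert (HL : 0 < L) by (apply Rinv_0_lt_compat; auto).
  assert (HLe : L * e = 1) by (unfold L; field; lra).
  set (gU := Ig beta c (TU e xi (PI / 4)) (TU1 e xi (PI / 4)) (TU2 e xi (PI / 4))) in *.
  set (gV := Ig beta c (TU e xi (- (PI / 4))) (TU1 e xi (- (PI / 4))) (TU2 e xi (- (PI / 4)))) in *.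
  set (Iu := RInt gU (- L) L) in *. set (Iv := RInt gV (- L) L) in *.
  set (Fu := RInt (fun x => Fprim p (TU e xi (PI / 4) x)) (- L) L) in *.
  set (Fv := RInt (fun x => Fprim p (TU e xi (- (PI / 4)) x)) (- L) L) in *.
  destruct (glb_facts p beta c a _ Ha Hla Qu) as [Hma Hmr].
  set (m := m_inf p beta c) in *.
  assert (Hm : 0 < m) by lra.
  assert (HFu : 0 < Fu).
  { apply (Kpos p (TU e xi (PI / 4)) (TU1 e xi (PI / 4)) (TU2 e xi (PI / 4)) Fu hp (TU_adm _ _ _ He Hcw)).
    apply IntR_of_cont; auto. apply Fcont; auto. apply TU_cont. intros; apply F_out; auto. }
  assert (HFv : 0 < Fv).
  { apply (Kpos p (TU e xi (- (PI / 4))) (TU1 e xi (- (PI / 4))) (TU2 e xi (- (PI / 4))) Fv hp (TU_adm _ _ _ He Hcw')).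
    apply IntR_of_cont; auto. apply Fcont; auto. apply TU_cont. intros; apply F_out; auto. }
  set (Ku := (p + 1) * Fu) in *. set (Kv := (p + 1) * Fv) in *.
  assert (HKu : 0 < Ku) by (unfold Ku; nra). assert (HKv : 0 < Kv) by (unfold Kv; nra).
  set (Pu := Rpower Ku th). set (Pv := Rpower Kv th).
  assert (HPu : 0 < Pu) by (unfold Pu, Rpower; apply exp_pos).
  assert (HPv : 0 < Pv) by (unfold Pv, Rpower; apply exp_pos).
  assert (Hmu : m * Pu <= Iu).
  { pose proof (Hmr _ Qu) as HH1. fold th in HH1. fold Pu in HH1.
    apply (Rmult_le_compat_r Pu) in HH1; [|lra].
    unfold Rdiv in HH1. rewrite Rmult_assoc, Rinv_l, Rmult_1_r in HH1 by lra. auto. }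
  assert (Hmv : m * Pv <= Iv).
  { pose proof (Hmr _ Qv) as HH1. fold th in HH1. fold Pv in HH1.
    apply (Rmult_le_compat_r Pv) in HH1; [|lra].
    unfold Rdiv in HH1. rewrite Rmult_assoc, Rinv_l, Rmult_1_r in HH1 by lra. auto. }
  assert (HIsum : Iu + Iv <= G * e).
  { unfold Iu, Iv. rewrite <- RInt_add by (apply cont_ex; apply Ig_cont).
    apply Rle_trans with (RInt (fun _ => e ^ 2 * K1 + (cs ^ 2 - c ^ 2)) (- L) L).
    - apply RInt_le'; try lra.
      + apply cont_plus; apply Ig_cont.
      + apply cont_const.
      + intros x _. unfold gU, gV, K1. apply pw_I; auto; try lra. nra.
    - rewrite RInt_cst. rewrite He2.
      assert (cs ^ 2 - c ^ 2 <= 2 * X) by (unfold X; nra).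
      assert ((L - - L) * (X * K1 + (cs ^ 2 - c ^ 2)) <= 2 * L * (X * (K1 + 2))) by nra.
      assert (2 * L * (X * (K1 + 2)) = G * e) by (rewrite <- He2; replace (2 * L * (e^2 * (K1 + 2))) with (2 * (K1 + 2) * e * (L * e)) by ring; rewrite HLe; unfold G; ring).
      lra. }
  assert (HKsum : 2 * H * L <= Ku + Kv).
  { unfold Ku, Kv, Fu, Fv. rewrite !K_abspow by auto.
    rewrite <- RInt_add by (apply cont_ex; apply (cont_comp _ (fun s => abspow s (p + 1))); [apply TU_cont| apply abspow_cont; lra]).
    assert (Hc : cont (fun x => abspow (TU e xi (PI / 4) x) (p + 1) + abspow (TU e xi (- (PI / 4)) x) (p + 1))).
    { apply cont_plus; apply (cont_comp _ (fun s => abspow s (p + 1))); try apply TU_cont; apply abspow_cont; lra. }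
    assert (Hle : RInt (fun x => e0 * phi (e * x) ^ 2) (- L) L <=
                  RInt (fun x => (abspow (TU e xi (PI / 4) x) (p + 1) + abspow (TU e xi (- (PI / 4)) x) (p + 1))
                                 + 2 * (e0 * (1/7) ^ 2)) (- L) L).
    { apply RInt_le'; try lra.
      - apply cont_mult; [apply cont_const| apply cont_pow, cont_scale, phi_cont].
      - apply cont_plus; auto. apply cont_const.
      - intros x _. pose proof (pw_low p (TU e xi (PI / 4) x) hp) as W1.
        pose proof (pw_low p (TU e xi (- (PI / 4)) x) hp) as W2. fold e0 in W1, W2.
        assert (Hsum : TU e xi (PI / 4) x ^ 2 + TU e xi (- (PI / 4)) x ^ 2 = phi (e * x) ^ 2).
        { unfold TU. replace (xi * x + - (PI / 4)) with ((xi * x + PI / 4) - PI / 2) by field.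
          destruct (shift_cs (xi * x + PI / 4)) as [-> _].
          pose proof (sin2_cos2 (xi * x + PI / 4)) as Hsc. unfold Rsqr in Hsc.
          replace (phi (e * x) ^ 2) with (phi (e * x) ^ 2 * 1) by ring. rewrite <- Hsc. ring. }
        nra. }
    rewrite RInt_mulc in Hle by (apply cont_ex; apply cont_pow, cont_scale, phi_cont).
    rewrite RInt_add in Hle by (apply cont_ex; auto; apply cont_const).
    rewrite RInt_cst in Hle.
    pose proof (phi_int e He) as Hpi. fold L in Hpi.
    assert (e0 * (L / 6) <= e0 * RInt (fun x => phi (e * x) ^ 2) (- L) L) by (apply Rmult_le_compat_l; lra).
    assert (0 < e0 * L) by nra. unfold H. fold L. lra. }
  assert (HPsum : Rpower (H * L) th <= Pu + Pv).
  { destruct (Rle_dec Ku Kv).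
    - assert (Rpower (H * L) th <= Pv) by (apply Rle_Rpower_l; [lra| split; [nra|lra]]). lra.
    - assert (Rpower (H * L) th <= Pu) by (apply Rle_Rpower_l; [lra| split; [nra|lra]]). lra. }
  set (P := Rpower (H * L) th) in *.
  assert (HP : 0 < P) by (unfold P, Rpower; apply exp_pos).
  assert (HmP : m * P <= G * e) by nra.
  assert (Hlnm : ln m <= ln G - th * ln H + (1 + th) * (ln X / 2)).
  { assert (m <= G * e * / P).
    { apply (Rmult_le_reg_r P); [auto|]. replace (G * e * / P * P) with (G * e) by (field; lra). lra. }
    apply ln_le in H0; auto.
    assert (0 < G * e) by (apply Rmult_lt_0_compat; auto).
    assert (0 < / P) by (apply Rinv_0_lt_compat; auto).
    rewrite ln_mult in H0 by auto. rewrite ln_mult in H0 by auto. rewrite ln_Rinv in H0 by auto.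
    unfold P in H0. rewrite ln_Rpower, ln_mult in H0 by auto.
    unfold L in H0. rewrite ln_Rinv in H0 by auto.
    assert (Hle : ln e = ln X / 2).
    { unfold e. rewrite <- Rpower_sqrt by lra. rewrite ln_Rpower. field. }
    rewrite Hle in H0. nra. }
  unfold d_val. fold m. fold k. fold rrr.
  rewrite Rabs_right by (apply Rle_ge, Rmult_le_pos; [lra| left; unfold Rpower; apply exp_pos]).
  fold cs. fold X.
  rewrite Rmult_assoc. apply Rmult_le_compat_l; [lra|].
  unfold Rpower. rewrite <- exp_plus. apply exp_le_exp.
  replace ((p + 3) / (2 * (p - 1))) with (rrr * (1 + th) / 2) by (unfold rrr, th; field; lra).
  assert (rrr * ln m <= rrr * (ln G - th * ln H + (1 + th) * (ln X / 2))) by (apply Rmult_le_compat_l; lra).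
  lra.
Qed.
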